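(* Let $F$ be a finite field with $q=|F|$. Let $k,m,n\in\mathbb{N}$ with $k\le m\le n+1$, and fix $a\in F^k$. Then the number of $x\in F^{m+n+1}$ with $(x_0,\ldots,x_{k-1})=a$ and $\operatorname{rank}(H_{m,n}(x))\le m$ is $q^{2m-k}$.
   Context: $\mathbb{N}=\{0,1,2,\ldots\}$. For $x=(x_0,\ldots,x_N)\in F^{N+1}$ and integers $p,p'\ge -1$ with $p+p'\le N$, $H_{p,p'}(x)=(x_{i+j})_{0\le i\le p,\,0\le j\le p'}$. *)

(* Defs.v *)
From HB Require Import structures.
From mathcomp Require Import all_boot all_order all_algebra.
Set Implicit Arguments. Unset Strict Implicit. Unset Printing Implicit Defensive.
Import GRing.Theory.
Local Open Scope ring_scope.

(* Hankel matrix H_{p,p'}(x) = (x_{i+j})_{0<=i<=p, 0<=j<=p'} for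
   x = (x_0,...,x_N) with p + p' <= N (here specialised to N = p + p',
   the only case the statement uses; indices i+j <= p+p' so inord is exact). *)
Definition hankel (F : fieldType) (p p' : nat) (x : 'I_(p + p').+1 -> F)
  : 'M[F]_(p.+1, p'.+1) :=
  \matrix_(i < p.+1, j < p'.+1) x (inord (i + j)).

(* Main.v *)
Require Import Defs.
From mathcomp Require Import all_boot all_order all_algebra.
From mathcomp Require Import zify.
From Stdlib Require Import ClassicalEpsilon.
Unset Implicit Arguments. Unset Strict Implicit. Unset Printing Implicit Defensive.
Import GRing.Theory.
Local Open Scope ring_scope.

Section Alg.
Variable F : fieldType.
Implicit Types (A B C D P X Y Z : {poly F}) (p s : seq F) (c : F).

Definition eqm (N : nat) A B := forall i, (i < N)%N -> A`_i = B`_i.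

Lemma eqm_refl N A : eqm N A A. Proof. by []. Qed.
Lemma eqm_sym N A B : eqm N A B -> eqm N B A.
Proof. by move=> h i hi; rewrite h. Qed.
Lemma eqm_trans N A B C : eqm N A B -> eqm N B C -> eqm N A C.
Proof. by move=> h1 h2 i hi; rewrite h1 // h2. Qed.
Lemma eqm_le N M A B : (M <= N)%N -> eqm N A B -> eqm M A B.
Proof. by move=> hMN h i hi; apply: h; apply: leq_trans hMN. Qed.

Arguments eqm_sym {N A B}. Arguments eqm_trans {N A B C}. Arguments eqm_le {N M A B}.
Lemma eqm_mulr N A B D : eqm N A B -> eqm N (A * D) (B * D).
Proof.
move=> h i hi; rewrite !coefM; apply: eq_bigr => j _; rewrite h //.
by apply: leq_ltn_trans hi; rewrite -ltnS.
Qed.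
Lemma eqm_mull N A B D : eqm N A B -> eqm N (D * A) (D * B).
Proof. by move=> h; rewrite ![D * _]mulrC; apply: eqm_mulr. Qed.

Arguments eqm_mulr {N A B} D. Arguments eqm_mull {N A B} D.
Lemma eqm0_small N C : (size C <= N)%N -> eqm N C 0 -> C = 0.
Proof.
move=> hs h; apply/polyP => i; rewrite coef0.
case: (ltnP i N) => hi; first by rewrite h // coef0.
by rewrite nth_default // (leq_trans hs).
Qed.

Arguments eqm0_small {N C}.
Definition goodp (a b N : nat) X : Prop :=
  exists C P, [/\ C != 0, (size C <= a)%N, (size P <= b)%N & eqm N (C * X) P].

Definition drop1 P := \poly_(i < (size P).-1) P`_i.+1.

Lemma coef_drop1 P i : (drop1 P)`_i = P`_i.+1.
Proof.
rewrite coef_poly; case: ltnP => // h.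
by rewrite nth_default // (leq_trans (leqSpred _)).
Qed.

Lemma drop1K P : P`_0 = 0 -> drop1 P * 'X = P.
Proof.
move=> h0; apply/polyP => i; rewrite coefMX; case: i => [|i] //=.
by rewrite coef_drop1.
Qed.

Lemma size_drop1 P : (size (drop1 P) <= (size P).-1)%N.
Proof. exact: size_poly. Qed.

Lemma size_mulX_le P b : (size P <= b.-1)%N -> (size (P * 'X)%R <= b)%N.
Proof.
move=> h; case: (eqVneq P 0) => [->|nz]; first by rewrite mul0r size_poly0.
rewrite size_mulX //; case: b h => [|b] /= h; last by [].
by move: nz; rewrite -size_poly_eq0; case: (size P) h.
Qed.

Lemma good_shift a b N Y : (0 < N)%N ->
  goodp a b N (Y * 'X) <-> goodp a b.-1 N.-1 Y.
Proof.
move=> hN; split.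
  case=> C [P [nzC sC sP e]]; exists C, (drop1 P); split => //.
    by apply: leq_trans (size_drop1 P) _; rewrite -!subn1 leq_sub2r.
  move=> i hi; rewrite coef_drop1 -e; last by rewrite -(prednK hN).
  by rewrite mulrA coefMX.
case=> C [P [nzC sC sP e]]; exists C, (P * 'X); split => //.
  exact: size_mulX_le.
move=> i hi; rewrite mulrA !coefMX; case: i hi => [|i] //= hi.
by apply: e; rewrite -ltnS (prednK hN).
Qed.

Lemma good_const1 a b N X c : (a <= b)%N ->
  goodp a b N X -> goodp a b N (X + c%:P).
Proof.
move=> hab [C [P [nzC sC sP e]]]; exists C, (P + c *: C); split => //.
  apply: leq_trans (size_polyD _ _) _; rewrite geq_max sP /=.
  exact: leq_trans (size_scale_leq _ _) (leq_trans sC hab).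
move=> i hi; rewrite mulrDr !coefD e //; congr (_ + _).
by rewrite mulrC mul_polyC.
Qed.

Lemma good_const a b N X c : (a <= b)%N ->
  goodp a b N (X + c%:P) <-> goodp a b N X.
Proof.
move=> hab; split; last exact: good_const1.
move=> h; have := good_const1 _ _ _ _ (-c) hab h.
by rewrite -addrA -polyCD subrr addr0.
Qed.

Lemma good_inv1 a b N X Z : (a <= N)%N -> eqm N (X * Z) 1 ->
  goodp a b N X -> goodp b a N Z.
Proof.
move=> haN hXZ [C [P [nzC sC sP e]]].
have hC : eqm N (P * Z) C.
  apply: eqm_trans (eqm_sym (eqm_mulr Z e)) _.
  rewrite -mulrA; apply: eqm_trans (eqm_mull C hXZ) _.
  by rewrite mulr1.
exists P, C; split => //.
apply/eqP => P0; move: nzC; rewrite (eqm0_small (leq_trans sC haN)) ?eqxx //.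
by apply: eqm_trans (eqm_sym hC) _; rewrite P0 mul0r.
Qed.

Lemma good_inv a b N X Z : (a <= N)%N -> (b <= N)%N -> eqm N (X * Z) 1 ->
  goodp a b N X <-> goodp b a N Z.
Proof.
move=> ha hb h; split; first exact: good_inv1.
by apply: good_inv1 => //; rewrite mulrC.
Qed.


Definition Zinv X (N : nat) :=
  (X`_0)^-1 *: \sum_(k < N) (1 - (X`_0)^-1 *: X) ^+ k.

Lemma Zinv_spec X N : X`_0 != 0 -> eqm N (X * Zinv X N) 1.
Proof.
move=> nz; set x0 := X`_0; set Y := 1 - x0^-1 *: X.
have eX : x0^-1 *: X = 1 - Y by rewrite /Y opprB addrC subrK.
have -> : X * Zinv X N = 1 - Y ^+ N.
  rewrite /Zinv -/x0 -/Y -scalerAr scalerAl eX.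
  by rewrite -opprB mulNr -subrX1 opprB.
have Y0 : Y`_0 = 0 by rewrite /Y coefB coef1 coefZ mulVf // subrr.
rewrite -(drop1K _ Y0) exprMn => i hi.
by rewrite coefB coefMXn hi subr0.
Qed.

Definition invl (s : seq F) : seq F :=
  mkseq (fun i => (Zinv (Poly s) (size s))`_i) (size s).

Lemma size_invl s : size (invl s) = size s.
Proof. by rewrite size_mkseq. Qed.

Lemma eqm_invl s : eqm (size s) (Poly (invl s)) (Zinv (Poly s) (size s)).
Proof. by move=> i hi; rewrite coef_Poly nth_mkseq. Qed.

Lemma invl_spec s : s`_0 != 0 -> eqm (size s) (Poly s * Poly (invl s)) 1.
Proof.
move=> nz; apply: eqm_trans (eqm_mull _ (eqm_invl s)) _.
by apply: Zinv_spec; rewrite coef_Poly.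
Qed.

Lemma eqm_uniq N X Z Z' : eqm N (X * Z) 1 -> eqm N (X * Z') 1 -> eqm N Z Z'.
Proof.
move=> h h'.
have e1 := eqm_mull Z h'. rewrite mulr1 mulrA [Z * X]mulrC in e1.
have e2 := eqm_mulr Z' h. rewrite mul1r in e2.
exact: eqm_trans (eqm_sym e1) e2.
Qed.

Lemma eqm_Poly_rcons p c : eqm (size p) (Poly (rcons p c)) (Poly p).
Proof. by move=> i hi; rewrite !coef_Poly nth_rcons hi. Qed.

Lemma rcons_head p c : p`_0 != 0 -> (rcons p c)`_0 = p`_0.
Proof.
move=> nz; rewrite nth_rcons; case: p nz => [|x p] /=; last by [].
by rewrite eqxx.
Qed.

Definition ginv (p : seq F) (c : F) := (invl (rcons p c))`_(size p).

Lemma invl_rcons p c : p`_0 != 0 -> invl (rcons p c) = rcons (invl p) (ginv p c).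
Proof.
move=> nz; apply: (@eq_from_nth _ 0).
  by rewrite size_rcons !size_invl size_rcons.
move=> i; rewrite size_invl size_rcons ltnS => hi.
rewrite nth_rcons size_invl; case: ltnP => [lt|ge]; last first.
  have -> : i = size p by apply/eqP; rewrite eqn_leq hi ge.
  by rewrite eqxx.
rewrite -[LHS]coef_Poly -[RHS]coef_Poly.
apply: (eqm_uniq (size p) (Poly p) _ _ _ _ i lt); last exact: invl_spec.
have h := invl_spec (rcons p c); rewrite rcons_head // size_rcons in h.
have h2 := eqm_le (leqnSn (size p)) (h nz).
exact: eqm_trans (eqm_sym (eqm_mulr _ (eqm_Poly_rcons p c))) h2.
Qed.

Lemma ginv_inj p : p`_0 != 0 -> injective (ginv p).
Proof.
move=> nz c1 c2 e.
have e' : invl (rcons p c1) = invl (rcons p c2) by rewrite !invl_rcons // e.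
have h1 := invl_spec (rcons p c1); rewrite rcons_head // size_rcons in h1.
have h2 := invl_spec (rcons p c2); rewrite rcons_head // size_rcons in h2.
have := h1 nz; have := h2 nz; rewrite e' => {}h2 {}h1.
rewrite ![Poly (rcons _ _) * _]mulrC in h1 h2.
have := eqm_uniq _ _ _ _ h1 h2 _ (ltnSn (size p)).
by rewrite !coef_Poly !nth_rcons ltnn eqxx.
Qed.

Definition goodl a b N (s : seq F) := goodp a b N (Poly s).

Lemma goodl_cons a b N c s : (a <= b)%N -> (0 < N)%N ->
  goodl a b N (c :: s) <-> goodl a b.-1 N.-1 s.
Proof.
move=> hab hN; rewrite /goodl /= cons_poly_def good_const //; exact: good_shift.
Qed.

Lemma goodl_cons0 a b N s : (0 < N)%N ->
  goodl a b N (0 :: s) <-> goodl a b.-1 N.-1 s.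
Proof.
move=> hN; rewrite /goodl /= cons_poly_def polyC0 addr0; exact: good_shift.
Qed.

Lemma goodl_inv a b N s : size s = N -> s`_0 != 0 -> (a <= N)%N -> (b <= N)%N ->
  goodl a b N s <-> goodl b a N (invl s).
Proof.
move=> hs nz ha hb; apply: good_inv => //; rewrite -hs; exact: invl_spec.
Qed.

Lemma goodl_full N s : goodl N.+1 0 N s.
Proof.
exists 'X^N, 0; split.
- by rewrite -size_poly_eq0 size_polyXn.
- by rewrite size_polyXn.
- by rewrite size_poly0.
- by move=> i hi; rewrite coefXnM hi coef0.
Qed.

Lemma goodl_a0 b N s : ~ goodl 0 b N s.
Proof.
by case=> C [P [nzC sC _ _]]; move: nzC; rewrite -size_poly_eq0; case: (size C) sC.
Qed.

End Alg.

Definition pb (P : Prop) : bool := if excluded_middle_informative P then true else false.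
Lemma pbP (P : Prop) : reflect P (pb P).
Proof. by rewrite /pb; case: excluded_middle_informative => h; constructor. Qed.

Section Count.
Variable F : finFieldType.
Implicit Types (p s t : seq F) (c : F) (P Q : seq F -> bool).

Fixpoint cnt P (r : nat) p : nat :=
  if r is r'.+1 then (\sum_(c : F) cnt P r' (rcons p c))%N else P p.

Lemma cnt_ext P Q r p : (forall t, size t = r -> P (p ++ t) = Q (p ++ t)) ->
  cnt P r p = cnt Q r p.
Proof.
elim: r p => [|r IH] p h /=; first by rewrite -[p]cats0 h.
apply: eq_bigr => c _; apply: IH => t ht; rewrite cat_rcons; apply: h => /=.
by rewrite ht.
Qed.

Lemma cnt_true P r p : (forall t, size t = r -> P (p ++ t)) -> cnt P r p = (#|F| ^ r)%N.
Proof.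
elim: r p => [|r IH] p h /=; first by have := h [::] erefl; rewrite cats0 => ->.
rewrite (eq_bigr (fun _ => #|F| ^ r)%N); last first.
  move=> c _; apply: IH => t ht; rewrite cat_rcons; apply: h => /=; by rewrite ht.
by rewrite sum_nat_const expnS.
Qed.

Lemma cnt_false P r p : (forall t, size t = r -> ~~ P (p ++ t)) -> cnt P r p = 0%N.
Proof.
elim: r p => [|r IH] p h /=; first by have := h [::] erefl; rewrite cats0 => /negbTE ->.
rewrite big1 // => c _; apply: IH => t ht; rewrite cat_rcons; apply: (h (c :: t)); by rewrite /= ht.
Qed.

Lemma cnt_drop P Q r c p : (forall s, P (c :: s) = Q s) -> cnt P r (c :: p) = cnt Q r p.
Proof.
move=> h; elim: r p => [|r IH] p /=; first by rewrite h.
by apply: eq_bigr => d _; rewrite -IH.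
Qed.

Lemma cnt_map (f : seq F -> seq F) (g : seq F -> F -> F) (R : pred (seq F)) P r p :
  (forall p c, R p -> R (rcons p c)) ->
  (forall p c, R p -> f (rcons p c) = rcons (f p) (g p c)) ->
  (forall p, R p -> injective (g p)) -> R p ->
  cnt (fun s => P (f s)) r p = cnt P r (f p).
Proof.
move=> hR hf hg; elim: r p => [|r IH] p Rp //=.
rewrite [RHS](reindex_inj (hg p Rp)) /=.
apply: eq_bigr => c _; rewrite IH; [by rewrite hf | exact: hR].
Qed.

End Count.
Arguments cnt {F}. Arguments cnt_ext {F}. Arguments cnt_true {F}. Arguments cnt_false {F}.
Arguments cnt_drop {F}. Arguments cnt_map {F}.

Section Main.
Variable F : finFieldType.
Implicit Types (p s t : seq F) (c : F).
Local Notation q := #|F|.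

Definition goodb a b N s := pb (goodl F a b N s).

Lemma goodb_eq a b N s a' b' N' s' :
  (goodl F a b N s <-> goodl F a' b' N' s') -> goodb a b N s = goodb a' b' N' s'.
Proof. by move=> [h1 h2]; apply/pbP/pbP. Qed.

Definition claimN N := forall a b p, (0 < a)%N -> (a + b <= N.+1)%N -> (size p <= b)%N ->
  cnt (goodb a b N) (N - size p) p = (q ^ (a + b - 1 - size p))%N.

Lemma step_le N : claimN N -> forall a b p, (0 < a)%N -> (a <= b)%N ->
  (a + b <= N.+2)%N -> (0 < size p)%N -> (size p <= b)%N ->
  cnt (goodb a b N.+1) (N.+1 - size p) p = (q ^ (a + b - 1 - size p))%N.
Proof.
move=> IH a [|b] [//|c p] ha hab habN _ hp //=.
rewrite (cnt_drop _ (goodb a b N)); last first.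
  by move=> s; apply: goodb_eq; apply: goodl_cons.
rewrite subSS IH //; try lia.
congr (_ ^ _)%N; lia.
Qed.

Lemma step_gt N : claimN N -> forall a b p, (0 < b)%N -> (b < a)%N ->
  (a + b <= N.+2)%N -> (0 < size p)%N -> (size p <= b)%N ->
  cnt (goodb a b N.+1) (N.+1 - size p) p = (q ^ (a + b - 1 - size p))%N.
Proof.
move=> IH a [|b] [//|c p] // _ hab habN _ hp; rewrite /= in hp.
have [->|nzc] := eqVneq c 0.
  rewrite /= (cnt_drop _ (goodb a b N)); last first.
    by move=> s; apply: goodb_eq; apply: goodl_cons0.
  rewrite subSS IH //; try lia.
  congr (_ ^ _)%N; lia.
set p0 := c :: p.
have hp0 : p0`_0 != 0 by [].
rewrite (cnt_ext _ (fun s => goodb b.+1 a N.+1 (invl F s))); last first.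
  move=> t ht; apply: goodb_eq; apply: goodl_inv.
  - rewrite size_cat ht /p0 /=; lia.
  - by [].
  - lia.
  - lia.
rewrite (cnt_map (invl F) (ginv F) (fun s => s`_0 != 0)) //; first last.
- exact: ginv_inj.
- exact: invl_rcons.
- by move=> s d nz; rewrite rcons_head.
rewrite -{1}(size_invl F p0) (step_le N IH (b.+1) a (invl F p0)); rewrite ?size_invl /p0 /=; try lia.
congr (_ ^ _)%N; lia.
Qed.

End Main.

Section Main2.
Variable F : finFieldType.
Local Notation q := #|F|.

Lemma step_any N : claimN F N -> forall a b p, (0 < a)%N -> (0 < b)%N ->
  (a + b <= N.+2)%N -> (0 < size p)%N -> (size p <= b)%N ->
  cnt (goodb F a b N.+1) (N.+1 - size p) p = (q ^ (a + b - 1 - size p))%N.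
Proof.
move=> IH a b p ha hb habN hp0 hp.
case: (leqP a b) => h; first exact: step_le.
exact: step_gt.
Qed.

Lemma claim_all N : claimN F N.
Proof.
elim: N => [|N IH].
  move=> a b p ha hab hp.
  have hb : b = 0%N by lia.
  have ha1 : a = 1%N by lia.
  subst; case: p hp => // _.
  rewrite (cnt_true _ _ _) //= => t _; apply/pbP; exact: goodl_full.
move=> a [|b] p ha hab hp.
  case: p hp => // _; rewrite subn0.
  case: (ltnP N.+1 a) => haN.
    have -> : a = N.+2 by lia.
    rewrite (cnt_true _ _ _); [by rewrite addn0 subn0 subn1 | move=> t _; apply/pbP; exact: goodl_full].
  rewrite /= (bigD1 0) //= big1 ?addn0; last first.
    move=> c nzc; apply: cnt_false => t ht /=; apply/pbP => hg.
    have := (goodl_inv F a 0 N.+1 (c :: t)); rewrite /= ht => /(_ erefl nzc haN isT).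
    by move=> [h1 _]; exact: (goodl_a0 F _ _ _ (h1 hg)).
  rewrite (cnt_drop _ (goodb F a 0 N)); last first.
    by move=> s; apply: goodb_eq; apply: goodl_cons0.
  have := IH a 0 [::] ha _ _; rewrite /= subn0 => -> //; try lia.
  congr (_ ^ _)%N; lia.
case: p hp => [|c p] hp; last by apply: step_any => //=; lia.
rewrite subn0 /= (eq_bigr (fun _ => q ^ (a + b.+1 - 1 - 1))%N); last first.
  move=> c _; have := step_any N IH a b.+1 [:: c] ha isT hab isT hp.
  by rewrite subSS subn0.
rewrite sum_nat_const -expnS; congr (_ ^ _)%N; lia.
Qed.

End Main2.

Section Bridge.
Variable F : finFieldType.
Implicit Types (p s t : seq F) (c : F) (P Q : seq F -> bool).

Lemma card_sum (T : finType) (P : pred T) : #|[set x | P x]| = (\sum_(x : T) P x)%N.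
Proof.
rewrite -sum1_card big_mkcond /=; apply: eq_bigr => x _; rewrite inE.
by case: (P x).
Qed.

Lemma sum_tupleS r (G : r.+1.-tuple F -> nat) :
  (\sum_(t : r.+1.-tuple F) G t = \sum_(c : F) \sum_(t : r.-tuple F) G [tuple of c :: t])%N.
Proof.
rewrite pair_big /=.
rewrite (reindex (fun ct : F * r.-tuple F => [tuple of ct.1 :: ct.2])) //=.
apply: onW_bij; exists (fun t : r.+1.-tuple F => (thead t, [tuple of behead t])).
  by case=> c t /=; congr (_, _); apply: val_inj.
by move=> t /=; rewrite [RHS]tuple_eta.
Qed.

Lemma tuple_cnt Q r p : #|[set t : r.-tuple F | Q (p ++ t)]| = cnt Q r p.
Proof.
rewrite card_sum; elim: r p => [|r IH] p /=.
  rewrite (eq_bigr (fun _ => Q p : nat)); last by move=> t _; rewrite tuple0 /= cats0.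
  by rewrite sum_nat_const card_tuple expn0 mul1n.
rewrite sum_tupleS; apply: eq_bigr => c _; rewrite -IH.
by apply: eq_bigr => t _; rewrite cat_rcons.
Qed.

Lemma cnt_prefix P p0 r : forall q0,
  cnt (fun s => (take (size q0 + size p0) s == q0 ++ p0) && P s) (size p0 + r) q0 =
  cnt P r (q0 ++ p0).
Proof.
elim: p0 => [|c p0 IH] q0 /=.
  rewrite cats0; apply: cnt_ext => t _; rewrite addn0 take_size_cat //.
  by rewrite eqxx.
rewrite (bigD1 c) //= big1 ?addn0; last first.
  move=> d ndc; apply: cnt_false => t ht; apply/negP => /andP [/eqP e _].
  move: ndc; have := congr1 (fun s => nth 0 s (size q0)) e.
  rewrite nth_take; last by rewrite addnS ltnS leq_addr.
  by rewrite nth_cat size_rcons ltnSn nth_rcons ltnn eqxx nth_cat ltnn subnn /= => ->; rewrite eqxx.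
rewrite -cat_rcons -IH; apply: cnt_ext => t _.
by rewrite size_rcons addSnnS cat_rcons.
Qed.

End Bridge.

Section Hank.
Variable F : fieldType.
Variables m n : nat.
Local Notation N := (m + n).+1.

Definition lst (x : {ffun 'I_N -> F}) : seq F := val [tuple x i | i < N].

Lemma nth_lst (x : {ffun 'I_N -> F}) l : (l < N)%N -> nth 0 (lst x) l = x (inord l).
Proof.
move=> hl; rewrite /lst -(tnth_nth 0 _ (Ordinal hl)) tnth_mktuple; congr (x _).
by apply: val_inj; rewrite /= inordK.
Qed.

Lemma size_lst (x : {ffun 'I_N -> F}) : size (lst x) = N.
Proof. by rewrite size_tuple. Qed.

Definition rpoly (c : 'rV[F]_m.+1) : {poly F} := \poly_(i < m.+1) c 0 (inord (m - i)).

Lemma hankel_coef (x : {ffun 'I_N -> F}) (c : 'rV[F]_m.+1) (j : 'I_n.+1) :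
  (c *m hankel x) 0 j = (rpoly c * Poly (lst x))`_(m + j).
Proof.
rewrite mxE coefM.
rewrite [RHS](bigID (fun i : 'I_ _ => (i < m.+1)%N)) /= [X in _ + X]big1 ?addr0; last first.
  by move=> i; rewrite -leqNgt => h; rewrite /rpoly coef_poly ltnNge h /= mul0r.
rewrite -(@big_ord_widen _ 0 +%R m.+1 (m + j).+1 (fun i => (rpoly c)`_i * (Poly (lst x))`_(m + j - i))) ?ltnS ?leq_addr //.
rewrite (reindex_inj rev_ord_inj) /=; apply: eq_bigr => i _.
have hj := ltn_ord j; have hi := ltn_ord i.
rewrite /rpoly coef_poly /= ltn_ord coef_Poly nth_lst; last by lia.
rewrite mxE; congr (c 0 _ * x _); apply: val_inj; rewrite /= ?inordK; lia.
Qed.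


Lemma rank_good (x : {ffun 'I_N -> F}) :
  (\rank (hankel x) <= m)%N <-> goodl F m.+1 m N (lst x).
Proof.
split.
  move=> hr; set H := hankel x.
  have nf : ~~ row_free H.
    by apply/negP; rewrite /row_free => /eqP h; move: hr; rewrite h ltnn.
  have nzK : kermx H != 0 by rewrite kermx_eq0.
  have [i hi] : exists i, row i (kermx H) != 0.
    case: (pickP (fun i => row i (kermx H) != 0)) => [i hi|h]; first by exists i.
    exfalso; move/eqP: nzK; apply; apply/row_matrixP => i.
    by rewrite row0; move: (h i) => /negbFE/eqP.
  set c := row i (kermx H).
  have hc : c *m H = 0 by rewrite /c -row_mul mulmx_ker row0.
  have [l hl] : exists l, c 0 l != 0.
    case: (pickP (fun l => c 0 l != 0)) => [l hl|h]; first by exists l.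
    exfalso; move/eqP: hi; apply; apply/rowP => l.
    by move: (h l) => /negbFE/eqP; rewrite !mxE.
  exists (rpoly c), (\poly_(i < m) (rpoly c * Poly (lst x))`_i); split.
  - apply/eqP => e; have := congr1 (fun p : {poly F} => p`_(m - l)) e.
    rewrite coef0 /rpoly coef_poly ifT; last by have := ltn_ord l; lia.
    have -> : inord (m - (m - l)) = l by apply: val_inj; rewrite /= inordK; have := ltn_ord l; lia.
    by move/eqP; rewrite (negbTE hl).
  - exact: size_poly.
  - exact: size_poly.
  move=> k hk; rewrite coef_poly; case: ltnP => // hmk.
  have hj : (k - m < n.+1)%N by lia.
  have := hankel_coef x c (Ordinal hj); rewrite hc mxE /= subnKC //.
case=> C [P [nzC sC sP e]].
set c : 'rV[F]_m.+1 := \row_(l < m.+1) C`_(m - l).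
have eC : rpoly c = C.
  apply/polyP => i; rewrite /rpoly coef_poly; case: ltnP => h.
    rewrite mxE inordK; last by lia.
    by congr (C`_ _); lia.
  by rewrite nth_default // (leq_trans sC).
have hc : c *m hankel x = 0.
  apply/rowP => j; rewrite hankel_coef eC e ?mxE; last by have := ltn_ord j; lia.
  by rewrite nth_default // (leq_trans sP) // leq_addr.
have nzc : c != 0.
  apply: contra nzC => /eqP c0; rewrite -eC c0 /rpoly; apply/eqP/polyP => i.
  by rewrite coef_poly coef0; case: ifP => _ //; rewrite mxE.
rewrite leqNgt; apply/negP => hr.
have rf : row_free (hankel x) by rewrite /row_free eqn_leq rank_leq_row hr.
by move: nzc; rewrite -(mulmx_free_eq0 c rf) hc eqxx.
Qed.

End Hank.

Theorem lemma16 (F : finFieldType) (k m n : nat) (hkm : (k <= m)%N)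
  (hmn : (m <= n.+1)%N) (a : 'I_k -> F) :
  #|[set x : {ffun 'I_(m + n).+1 -> F} |
      [forall i : 'I_k, x (inord i) == a i] &&
      (\rank (hankel x) <= m)%N]| = (#|F| ^ (2 * m - k))%N.
Proof.
set pa := [seq a i | i <- enum 'I_k].
have spa : size pa = k by rewrite size_map size_enum_ord.
have hkN : (k <= (m + n).+1)%N by lia.
pose Q := fun s : seq F => (take k s == pa) && goodb F m.+1 m (m + n).+1 s.
have E1 : [set x : {ffun 'I_(m + n).+1 -> F} | [forall i : 'I_k, x (inord i) == a i] &&
      (\rank (hankel x) <= m)%N] = [set x | Q (lst F m n x)].
  apply/setP => x; rewrite !inE /Q; congr andb.
    apply/forallP/eqP.
      move=> h; apply: (@eq_from_nth _ 0).
        by rewrite size_takel ?size_lst // spa.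
      move=> i; rewrite size_takel ?size_lst // => hi.
      rewrite nth_take // nth_lst; last by lia.
      rewrite (nth_map (Ordinal hi)); last by rewrite size_enum_ord.
      have -> : nth (Ordinal hi) (enum 'I_k) i = Ordinal hi.
        by apply: val_inj; rewrite /= nth_enum_ord.
      by apply/eqP; exact: (h (Ordinal hi)).
    move=> e i; apply/eqP; have := congr1 (fun s => nth 0 s i) e.
    rewrite nth_take ?ltn_ord // nth_lst; last by have := ltn_ord i; lia.
    rewrite (nth_map i); last by rewrite size_enum_ord.
    have -> : nth i (enum 'I_k) i = i by apply: val_inj; rewrite /= nth_enum_ord.
    by [].
  case: (rank_good F m n x) => h1 h2; apply/idP/pbP; [exact: h1 | exact: h2].
rewrite E1.
have E2 : #|[set x : {ffun 'I_(m + n).+1 -> F} | Q (lst F m n x)]| =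
          #|[set t : (m + n).+1.-tuple F | Q ([::] ++ t)]|.
  rewrite !card_sum [RHS](reindex (fun x : {ffun 'I_(m + n).+1 -> F} => [tuple x i | i < (m + n).+1])) //=.
  apply: onW_bij; exists (fun t : (m + n).+1.-tuple F => [ffun i => tnth t i]).
    by move=> x; apply/ffunP => i; rewrite ffunE tnth_mktuple.
  by move=> t; apply: eq_from_tnth => i; rewrite tnth_mktuple ffunE.
rewrite E2 tuple_cnt.
have := cnt_prefix F (goodb F m.+1 m (m + n).+1) pa ((m + n).+1 - k) [::].
move=> E3; rewrite /= spa subnKC // in E3.
transitivity (cnt (fun s : seq F => (take (0 + k) s == pa) && goodb F m.+1 m (m + n).+1 s)
      (m + n).+1 [::]).
  by apply: cnt_ext => t _; rewrite add0n.
rewrite E3.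
have := claim_all F (m + n).+1 m.+1 m pa isT _ _; rewrite spa => -> //; try lia.
congr (_ ^ _)%N; lia.
Qed.
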